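(* Let $G$ be a finitely presented group. Then for all $k\geq0$, \[ \mathcal{W}_k(B_{\mathfrak{H}(G)})\setminus\{0\}=\mathcal{R}_k(G)\setminus\{0\}, \] as subsets of $H^1(G,\mathbb{C})$.
   Context: Let $X=G_{\mathrm{ab}}\otimes\mathbb{C}=H_1(G,\mathbb{C})$; $\mathbb{C}[X]=\operatorname{Sym}(X)$ is the coordinate ring of $H^1(G,\mathbb{C})=X^*$. The infinitesimal Alexander invariant $B_{\mathfrak{H}(G)}$ is the $\mathbb{C}[X]$-module presented by $\nabla=\delta_3+\mathrm{id}\otimes\partial_G\colon\mathbb{C}[X]\otimes(\bigwedge^3X\oplus H_2(G,\mathbb{C}))\to\mathbb{C}[X]\otimes\bigwedge^2X$, where $\delta_3(x\wedge y\wedge z)=x\otimes y\wedge z-y\otimes x\wedge z+z\otimes x\wedge y$ and $\partial_G$ is dual to the cup product $\bigwedge^2H^1(G,\mathbb{C})\to H^2(G,\mathbb{C})$. For a finitely generated module $N$ presented by $R^r\xrightarrow{\nabla}R^s\to N\to 0$, $\mathcal{F}_k(N)$ is generated by the $(s-k)$-minors of $\nabla$ if $0<s-k\le\min\{r,s\}$, equals $R$ if $s-k\le0$, and is $0$ otherwise; $\mathcal{W}_k(N)=Z(\mathcal{F}_{k-1}(N))$. $\mathcal{R}_k(G)$ is the set of $z\in H^1(G,\mathbb{C})$ such that the degree-one cohomology of $0\to\mathbb{C}\to H^1(G,\mathbb{C})\to H^2(G,\mathbb{C})\to0$ (differentials $c\mapsto cz$, $x\mapsto x\cup z$) has dimension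 $\geq k$. *)

(* Defs.v *)
From mathcomp Require Import all_boot all_algebra.
From mathcomp Require Import Rstruct.
From mathcomp Require Export complex.
From mathcomp.multinomials Require Export mpoly.
Set Implicit Arguments. Unset Strict Implicit. Unset Printing Implicit Defensive.
Import GRing.Theory.
Local Open Scope ring_scope.

Definition CC : fieldType := (Rdefinitions.R)[i].

(* Basis indices of /\^2 X and /\^3 X for X = C^n with basis e_0..e_{n-1}:
   e_i /\ e_j with i < j, and e_a /\ e_b /\ e_c with a < b < c. *)
Definition P2 (n : nat) := {p : 'I_n * 'I_n | (p.1 < p.2)%N}.
Definition P3 (n : nat) := {p : 'I_n * 'I_n * 'I_n | (p.1.1 < p.1.2)%N && (p.1.2 < p.2)%N}.

(* Cup-product data of G:  n = dim H_1(G,C), m = dim H_2(G,C), and for the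
   basis h_0..h_{m-1} of H_2(G,C), cup t p = <e_i^* u e_j^*, h_t> where
   p = (i,j), i<j, i.e. the coefficient of e_i /\ e_j in partial_G(h_t).
   This is exactly the linear map partial_G : H_2 -> /\^2 X, dual to the cup
   product /\^2 H^1 -> H^2. *)
Definition cupdata (n m : nat) := 'I_m -> P2 n -> CC.

Notation CX n := {mpoly CC[n]}.

(* The presentation matrix nabla = delta_3 + id (x) partial_G of the infinitesimal
   Alexander invariant, rows indexed by the basis of /\^2 X, columns by the
   basis of /\^3 X (+) H_2(G,C). *)
Definition nabla (n m : nat) (c : cupdata n m) (q : P2 n) (col : P3 n + 'I_m) : CX n :=
  match col with
  | inl t =>
      let a := (val t).1.1 in let b := (val t).1.2 in let d := (val t).2 in
      (* delta_3(e_a/\e_b/\e_d) = e_a (x) e_b/\e_d - e_b (x) e_a/\e_d + e_d (x) e_a/\e_b *)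
      (if val q == (b, d) then 'X_a else 0)
      - (if val q == (a, d) then 'X_b else 0)
      + (if val q == (a, b) then 'X_d else 0)
  | inr t => (c t q)%:MP
  end.

Definition is_minor (R : comRingType) (I J : finType) (A : I -> J -> R) (d : nat) (p : R) : Prop :=
  exists (f : 'I_d -> I) (g : 'I_d -> J),
    injective f /\ injective g /\ p = \det (\matrix_(a < d, b < d) A (f a) (g b)).

Definition in_ideal_gen (R : comRingType) (S : R -> Prop) (p : R) : Prop :=
  exists l : seq (R * R), (forall u, u \in l -> S u.2) /\ p = \sum_(u <- l) u.1 * u.2.

(* Fitting ideal F_k(N) of the module presented by A : R^r -> R^s, with
   s = #|I|, r = #|J|, for k an integer. *)
Definition fitting (R : comRingType) (I J : finType) (A : I -> J -> R) (k : int) (p : R) : Prop :=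
  let s := #|I| in let r := #|J| in
  let d := (s%:Z - k)%R in
  if (d <= 0)%R then True
  else if (`|d|%N <= minn r s)%N then in_ideal_gen (is_minor A `|d|%N) p
  else p = 0.

(* Zero locus in H^1(G,C) = X^* = C^n of an ideal of C[X]. *)
Definition zero_locus (n : nat) (I : CX n -> Prop) (z : 'rV[CC]_n) : Prop :=
  forall p, I p -> p.@[fun i => z 0 i] = 0.

(* W_k(N) = Z(F_{k-1}(N)), for N = B_{H(G)}. *)
Definition Wk (n m : nat) (c : cupdata n m) (k : nat) : 'rV[CC]_n -> Prop :=
  zero_locus (fitting (nabla c) (k%:Z - 1)).

(* Cup product x u z in H^2(G,C) = C^m (coordinates w.r.t. the dual basis of h_t). *)
Definition cup (n m : nat) (c : cupdata n m) (x z : 'rV[CC]_n) : 'rV[CC]_m :=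
  \row_(t < m) \sum_(p : P2 n)
     (x 0 (val p).1 * z 0 (val p).2 - x 0 (val p).2 * z 0 (val p).1) * c t p.

(* Matrices of the differentials of 0 -> C -> H^1 -> H^2 -> 0 (row-vector
   convention): d0(c) = c z, d1(x) = x u z. *)
Definition d0mx (n : nat) (z : 'rV[CC]_n) : 'M[CC]_(1, n) := z.
Definition d1mx (n m : nat) (c : cupdata n m) (z : 'rV[CC]_n) : 'M[CC]_(n, m) :=
  \matrix_(i < n) cup c (delta_mx 0 i) z.

Definition H1dim (n m : nat) (c : cupdata n m) (z : 'rV[CC]_n) : nat :=
  (\rank (kermx (d1mx c z)) - \rank (d0mx z))%N.

Definition Rk (n m : nat) (c : cupdata n m) (k : nat) (z : 'rV[CC]_n) : Prop :=
  (k <= H1dim c z)%N.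

(* Main.v *)
Require Import Defs.
From mathcomp Require Import all_boot all_algebra.
From mathcomp Require Import ring zify.
Set Implicit Arguments. Unset Strict Implicit. Unset Printing Implicit Defensive.
Import GRing.Theory.
Local Open Scope ring_scope.

Section Minors.
Variable F : fieldType.

Lemma rowsub_free p q d (B : 'M[F]_(p,q)) (h : 'I_d -> 'I_p) :
  injective h -> row_free B -> row_free (rowsub h B).
Proof.
move=> hi /row_freeP [C BC]; apply/row_freeP.
exists (C *m (rowsub h (1%:M : 'M[F]_p))^T).
rewrite mulmxA rowsubE -(mulmxA _ B) BC mulmx1.
apply/matrixP => a b; rewrite !mxE (bigD1 (h a)) //= big1 => [|k hk].
  rewrite !mxE eqxx mul1r addr0 (inj_eq hi) eq_sym; by case: (b == a).
by rewrite !mxE eq_sym (negPf hk) mul0r.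
Qed.

Lemma minor_rank p q d (A : 'M[F]_(p,q)) (f : 'I_d -> 'I_p) (g : 'I_d -> 'I_q) :
  (\rank (\matrix_(a, b) A (f a) (g b)) <= \rank A)%N.
Proof.
have -> : \matrix_(a, b) A (f a) (g b) = (rowsub g (rowsub f A)^T)^T.
  by apply/matrixP => a b; rewrite !mxE.
rewrite mxrank_tr rowsubE (leq_trans (mxrankM_maxr _ _)) // mxrank_tr.
by rewrite rowsubE mxrankM_maxr.
Qed.

Lemma minor_nz_rank p q d (A : 'M[F]_(p,q)) (f : 'I_d -> 'I_p) (g : 'I_d -> 'I_q) :
  \det (\matrix_(a, b) A (f a) (g b)) != 0 -> (d <= \rank A)%N.
Proof.
move=> hd; have := minor_rank A f g.
have : row_free (\matrix_(a, b) A (f a) (g b)) by rewrite row_free_unit unitmxE unitfE.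
by move/eqP => ->.
Qed.

Lemma minor_exists p q d (A : 'M[F]_(p,q)) : (d <= \rank A)%N ->
  exists f : 'I_d -> 'I_p, exists g : 'I_d -> 'I_q,
    injective f /\ injective g /\ \det (\matrix_(a, b) A (f a) (g b)) != 0.
Proof.
move=> hd.
pose f0 := maxrankfun A.
pose h := widen_ord hd.
have hi : injective h by move=> x y /(congr1 val) /= /val_inj.
pose C := rowsub h (rowsub f0 A).
have Cf : row_free C by apply: rowsub_free => //; exact: maxrowsub_free.
have CT : row_full C^T by rewrite /row_full mxrank_tr; exact: Cf.
pose g := fullrankfun CT.
exists (f0 \o h), g; split; first by move=> x y /maxrankfun_inj /hi.
split; first exact: fullrankfun_inj.
have := fullrowsub_unit CT; rewrite unitmxE unitfE -det_tr.
congr (_ != 0); congr (\det _); apply/matrixP => a b; rewrite !mxE //.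
Qed.

End Minors.
Section LA.
Variables (n m : nat) (c : cupdata n m) (z : 'rV[CC]_n).
Let ev : 'I_n -> CC := fun i => z 0 i.
Let s := #|{: P2 n}|.
Let r := #|{: (P3 n + 'I_m)%type}|.

Definition Nm : 'M[CC]_(s, r) :=
  \matrix_(i, j) (nabla c (enum_val i) (enum_val j)).@[ev].

Lemma sum_rank (G : P2 n -> CC) : \sum_(q < s) G (enum_val q) = \sum_(p : P2 n) G p.
Proof.
rewrite (reindex enum_rank) /=; last by apply: onW_bij; exact: enum_rank_bij.
by apply: eq_bigr => p _; rewrite enum_rankK.
Qed.

Lemma sum_delta (x : 'rV[CC]_n) (k : 'I_n) : \sum_i x 0 i * (k == i)%:R = x 0 k.
Proof.
rewrite (bigD1 k) // big1 => [|i hi]; first by rewrite /= eqxx mulr1 addr0.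
by rewrite eq_sym (negPf hi) mulr0.
Qed.

Lemma mulNm (w : 'rV[CC]_s) j :
  (w *m Nm) 0 j = \sum_(p : P2 n) w 0 (enum_rank p) * (nabla c p (enum_val j)).@[ev].
Proof.
rewrite mxE -(sum_rank (fun p => w 0 (enum_rank p) * (nabla c p (enum_val j)).@[ev])).
by apply: eq_bigr => q _; rewrite enum_valK mxE.
Qed.

Lemma ev_if b a : (if b then 'X_a else 0 : CX n).@[ev] = if b then z 0 a else 0.
Proof. by case: b; rewrite ?mevalXU ?meval0. Qed.

Definition mkP2 (u v : 'I_n) (h : (u < v)%N) : P2 n :=
  exist (fun p : 'I_n * 'I_n => (p.1 < p.2)%N) (u, v) h.

Lemma sum_pick (G : P2 n -> CC) (u v : 'I_n) (h : (u < v)%N) y :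
  \sum_(p : P2 n) G p * (if val p == (u,v) then y else 0) = G (mkP2 h) * y.
Proof.
rewrite (bigD1 (mkP2 h)) // big1 => [|p hp]; first by rewrite /= eqxx addr0.
rewrite ifF ?mulr0 //; apply/negbTE; apply: contra hp => /eqP e.
by apply/eqP/val_inj.
Qed.

Definition Wf (w : 'rV[CC]_s) (i j : 'I_n) : CC :=
  match (insub (i, j) : option (P2 n)) with Some p => w 0 (enum_rank p) | None => 0 end.

Lemma WfE (w : 'rV[CC]_s) (u v : 'I_n) (h : (u < v)%N) : Wf w u v = w 0 (enum_rank (mkP2 h)).
Proof. by rewrite /Wf insubT. Qed.

Lemma WfP (w : 'rV[CC]_s) (p : P2 n) : Wf w (val p).1 (val p).2 = w 0 (enum_rank p).
Proof. by rewrite /Wf -surjective_pairing valK. Qed.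

Lemma col_inl (w : 'rV[CC]_s) (t : P3 n) :
  let a := (val t).1.1 in let b := (val t).1.2 in let d := (val t).2 in
  (w *m Nm) 0 (enum_rank (inl t)) = Wf w b d * z 0 a - Wf w a d * z 0 b + Wf w a b * z 0 d.
Proof.
move=> a b d; rewrite mulNm enum_rankK.
have /andP [hab hbd] := valP t.
have had : (a < d)%N := ltn_trans hab hbd.
under eq_bigr => p _ do rewrite /nabla /= mevalD mevalB !ev_if mulrDr mulrBr.
rewrite big_split sumrB.
by rewrite !sum_pick -!(WfE w).
Qed.

Lemma col_inr (w : 'rV[CC]_s) (t : 'I_m) :
  (w *m Nm) 0 (enum_rank (inr t)) = \sum_(p : P2 n) w 0 (enum_rank p) * c t p.
Proof. by rewrite mulNm enum_rankK; under eq_bigr => p _ do rewrite /nabla /= mevalC. Qed.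


Definition Fm : 'M[CC]_(n, s) := \matrix_(i, q)
  (((val (enum_val q)).1 == i)%:R * z 0 (val (enum_val q)).2
   - ((val (enum_val q)).2 == i)%:R * z 0 (val (enum_val q)).1).

Lemma FmE (x : 'rV[CC]_n) q : (x *m Fm) 0 q =
  x 0 (val (enum_val q)).1 * z 0 (val (enum_val q)).2
  - x 0 (val (enum_val q)).2 * z 0 (val (enum_val q)).1.
Proof.
rewrite mxE.
transitivity (\sum_i ((x 0 i * ((val (enum_val q)).1 == i)%:R) * z 0 (val (enum_val q)).2
   - (x 0 i * ((val (enum_val q)).2 == i)%:R) * z 0 (val (enum_val q)).1)).
  by apply: eq_bigr => i _; rewrite mxE; ring.
by rewrite sumrB -!mulr_suml !sum_delta.
Qed.

Lemma WfF (x : 'rV[CC]_n) (i j : 'I_n) : (i < j)%N ->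
  Wf (x *m Fm) i j = x 0 i * z 0 j - x 0 j * z 0 i.
Proof. by move=> h; rewrite (WfE _ h) FmE enum_rankK. Qed.

Lemma d1E (x : 'rV[CC]_n) t : (x *m d1mx c z) 0 t = cup c x z 0 t.
Proof.
rewrite mxE.
under eq_bigr => i _ do rewrite !mxE mulr_sumr.
rewrite exchange_big mxE; apply: eq_bigr => p _.
transitivity (\sum_i ((x 0 i * ((val p).1 == i)%:R) * (z 0 (val p).2 * c t p)
   - (x 0 i * ((val p).2 == i)%:R) * (z 0 (val p).1 * c t p))).
  by apply: eq_bigr => i _; rewrite !mxE !eqxx !andTb; ring.
by rewrite sumrB -!mulr_suml !sum_delta; ring.
Qed.

Lemma keyA (x : 'rV[CC]_n) : (x *m Fm) *m Nm = 0 <-> x *m d1mx c z = 0.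
Proof.
split => H.
  apply/rowP => t; rewrite d1E [LHS]mxE [RHS]mxE.
  have := congr1 (fun M : 'rV_r => M 0 (enum_rank (inr t))) H.
  rewrite col_inr [RHS]mxE => E; apply: (etrans _ E).
  by apply: eq_bigr => p _; rewrite FmE enum_rankK.
apply/rowP => j; rewrite [RHS]mxE -(enum_valK j); case: (enum_val j) => [t|t].
  rewrite col_inl.
  have /andP [hab hbd] := valP t.
  have had := ltn_trans hab hbd.
  rewrite !WfF //; ring.
rewrite col_inr; transitivity (cup c x z 0 t); last by rewrite -d1E H mxE.
by rewrite mxE; apply: eq_bigr => p _; rewrite FmE enum_rankK.
Qed.


Lemma Wf0 i j : Wf 0 i j = 0.
Proof. by rewrite /Wf; case: insub => // p; rewrite mxE. Qed.

Variables (j0 : 'I_n) (hz : z 0 j0 != 0).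

Lemma keyC (x : 'rV[CC]_n) : x *m Fm = 0 -> x = (x 0 j0 / z 0 j0) *: z.
Proof.
move=> H; apply/rowP => i; rewrite mxE.
case: (ltngtP i j0) => hij.
- have := congr1 (fun M => Wf M i j0) H; rewrite WfF // Wf0.
  move/eqP; rewrite subr_eq0 => /eqP E.
  by apply: (mulIf hz); rewrite E mulrAC divfK.
- have := congr1 (fun M => Wf M j0 i) H; rewrite WfF // Wf0.
  move/eqP; rewrite subr_eq0 => /eqP E.
  by apply: (mulIf hz); rewrite -E mulrAC divfK.
- have -> : i = j0 by apply: val_inj.
  by rewrite divfK.
Qed.

Section KeyB.
Variable w : 'rV[CC]_s.
Hypothesis Hw : w *m Nm = 0.

Definition Om (i j : 'I_n) : CC :=
  if (i < j)%N then Wf w i j else if (j < i)%N then - Wf w j i else 0.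

Lemma H3 (a b d : 'I_n) : (a < b)%N -> (b < d)%N ->
  Wf w b d * z 0 a - Wf w a d * z 0 b + Wf w a b * z 0 d = 0.
Proof.
move=> hab hbd.
have ht : ((a < b)%N && (b < d)%N) by rewrite hab hbd.
pose t : P3 n := exist (fun p : 'I_n * 'I_n * 'I_n => (p.1.1 < p.1.2)%N && (p.1.2 < p.2)%N) ((a, b), d) ht.
have := congr1 (fun M : 'rV_r => M 0 (enum_rank (inl t))) Hw.
by rewrite col_inl mxE.
Qed.

Definition Cf (i j k : 'I_n) := z 0 i * Om j k - z 0 j * Om i k + z 0 k * Om i j.

Lemma OmA i j : Om j i = - Om i j.
Proof.
rewrite /Om; case: (ltngtP i j) => h; rewrite ?opprK //.
by rewrite oppr0.
Qed.

Lemma Om_lt (i j : 'I_n) : (i < j)%N -> Om i j = Wf w i j.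
Proof. by rewrite /Om => ->. Qed.

Lemma Csorted (i j k : 'I_n) : (i < j)%N -> (j < k)%N -> Cf i j k = 0.
Proof.
move=> hij hjk; have hik := ltn_trans hij hjk.
rewrite /Cf !Om_lt // -(H3 hij hjk); ring.
Qed.

Lemma Cswap12 i j k : Cf j i k = - Cf i j k.
Proof. rewrite /Cf (OmA i j); ring. Qed.

Lemma Cswap23 i j k : Cf i k j = - Cf i j k.
Proof. rewrite /Cf (OmA j k); ring. Qed.

Lemma Om_ii i : Om i i = 0.
Proof. by rewrite /Om ltnn. Qed.

Lemma Call i j k : Cf i j k = 0.
Proof.
have C13 : forall a b d, Cf d b a = - Cf a b d.
  by move=> a b d; rewrite /Cf (OmA a b) (OmA b d) (OmA a d); ring.
have Cii : forall a b, Cf a a b = 0 by move=> a b; rewrite /Cf Om_ii; ring.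
have Cjj : forall a b, Cf a b b = 0 by move=> a b; rewrite /Cf Om_ii; ring.
have Cik : forall a b, Cf a b a = 0 by move=> a b; rewrite /Cf Om_ii (OmA a b); ring.
case: (ltngtP i j) => hij; last by move/val_inj: hij => <-; exact: Cii.
all: case: (ltngtP j k) => hjk; last by move/val_inj: hjk => <-; exact: Cjj.
all: case: (ltngtP i k) => hik; last by move/val_inj: hik => <-; exact: Cik.
all: first [ exfalso; lia
 | by rewrite Csorted
 | by rewrite (Cswap23 i k j) Csorted ?oppr0
 | by rewrite (Cswap12 j i k) Csorted ?oppr0
 | by rewrite (C13 k j i) (Cswap12 j k i) Csorted ?oppr0 ?opprK
 | by rewrite (C13 k j i) (Cswap23 k i j) Csorted ?oppr0 ?opprK
 | by rewrite (C13 k j i) Csorted ?oppr0 ].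
Qed.

Lemma keyB : exists x : 'rV[CC]_n, w = x *m Fm.
Proof.
exists (\row_i (Om i j0 / z 0 j0)); apply/rowP => q; rewrite FmE !mxE.
have hab : ((val (enum_val q)).1 < (val (enum_val q)).2)%N := valP (enum_val q).
set a := (val (enum_val q)).1 in hab *; set b := (val (enum_val q)).2 in hab *.
have -> : w 0 q = Om a b by rewrite Om_lt // -{1}(enum_valK q) -WfP.
have E := Call a b j0; rewrite /Cf in E.
transitivity ((Om a b * z 0 j0 - (z 0 a * Om b j0 - z 0 b * Om a j0 + z 0 j0 * Om a b)) / z 0 j0).
  by rewrite E subr0 mulfK.
field; exact: hz.
Qed.

End KeyB.

Lemma H1dim_j0 : H1dim c z = (s - \rank Nm)%N.
Proof.
have e1 : \rank ((kermx (d1mx c z)) *m Fm) = \rank (kermx Nm).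
  apply/eqP; rewrite eqn_leq !mxrankS //.
    apply/row_subP => i; have /sub_kermxP Hw := row_sub i (kermx Nm).
    have [x Ex] := keyB Hw.
    rewrite Ex; apply: submxMr; apply/sub_kermxP; apply/keyA; rewrite -Ex; exact: Hw.
  apply/row_subP => i; rewrite (row_mul i (kermx (d1mx c z)) Fm).
  apply/sub_kermxP; apply/keyA.
  by apply/sub_kermxP; exact: row_sub.
have e2 := mxrank_mul_ker (kermx (d1mx c z)) Fm.
have hzF : z *m Fm = 0.
  by apply/rowP => q; rewrite FmE mxE mulrC subrr.
have hzK : (z <= (kermx (d1mx c z)))%MS by apply/sub_kermxP; apply/keyA; rewrite hzF mul0mx.
have hkz : (kermx Fm <= z)%MS.
  apply/row_subP => i; have /sub_kermxP H := row_sub i (kermx Fm).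
  by rewrite (keyC H); apply: scalemx_sub; exact: submx_refl.
have hzk : (z <= kermx Fm)%MS by apply/sub_kermxP.
have hz0 : z != 0 by apply: contra hz => /eqP ->; rewrite mxE.
have e3 : \rank ((kermx (d1mx c z)) :&: kermx Fm)%MS = 1%N.
  have -> : \rank ((kermx (d1mx c z)) :&: kermx Fm)%MS = \rank z.
    apply/eqP; rewrite eqn_leq !mxrankS //.
      by rewrite sub_capmx hzK hzk.
    exact: submx_trans (capmxSr _ _) hkz.
  by rewrite rank_rV hz0.
rewrite /H1dim /d0mx rank_rV hz0 -e2 e3 addn1 subn1 /= e1 mxrank_ker.
by [].
Qed.

End LA.

Lemma minor_eval n m (c : cupdata n m) (z : 'rV[CC]_n) d
  (f : 'I_d -> P2 n) (g : 'I_d -> (P3 n + 'I_m)%type) :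
  (\det (\matrix_(a, b) nabla c (f a) (g b))).@[fun i => z 0 i] =
  \det (\matrix_(a, b) Nm c z (enum_rank (f a)) (enum_rank (g b))).
Proof.
rewrite -(det_map_mx (meval (fun i => z 0 i))); congr (\det _).
by apply/matrixP => a b; rewrite !mxE !enum_rankK.
Qed.

Lemma Wk_rank n m (c : cupdata n m) (k : nat) (z : 'rV[CC]_n) :
  Wk c k z <-> (k + \rank (Nm c z) <= #|{: P2 n}|)%N.
Proof.
rewrite /Wk /zero_locus /fitting; cbv beta zeta.
have hrr := rank_leq_row (Nm c z); have hrc := rank_leq_col (Nm c z).
case h1 : (#|{: P2 n}|%:Z - (k%:Z - 1) <= 0)%R.
  split => H; exfalso.
    by have := H 1 I; rewrite meval1 => /eqP; rewrite oner_eq0.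
  lia.
case h2 : (`|(#|{: P2 n}|%:Z - (k%:Z - 1))%R|%N <= minn #|{: (P3 n + 'I_m)%type}| #|{: P2 n}|)%N; last first.
  split => [_|_ p ->]; last exact: meval0.
  lia.
split => H.
  rewrite leqNgt; apply/negP => hlt.
  have [f [g [fi [gi hdet]]]] := @minor_exists _ _ _ `|(#|{: P2 n}|%:Z - (k%:Z - 1))%R|%N (Nm c z) ltac:(lia).
  pose p := \det (\matrix_(a, b) nabla c (enum_val (f a)) (enum_val (g b))).
  have Hp : p.@[fun i => z 0 i] = 0.
    apply: H; rewrite ?h1 ?h2.
    exists [:: (1, p)]; split.
      move=> u; rewrite mem_seq1 => /eqP -> /=.
      exists (enum_val \o f), (enum_val \o g); split.
        by move=> x y /enum_val_inj /fi.
      split; first by move=> x y /enum_val_inj /gi.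
      by [].
    by rewrite big_seq1 mul1r.
  move: Hp; rewrite /p minor_eval.
  have -> : \matrix_(a, b) Nm c z (enum_rank (enum_val (f a))) (enum_rank (enum_val (g b))) =
     \matrix_(a, b) Nm c z (f a) (g b).
    by apply/matrixP => a b; rewrite !mxE !enum_valK.
  by move=> E; rewrite E eqxx in hdet.
move=> p [l [hl ->]].
rewrite raddf_sum; apply: big1_seq => u /andP [_ hu].
change ((u.1 * u.2).@[fun i => z 0 i] = 0); rewrite mevalM.
have [f [g [fi [gi ->]]]] := hl u hu.
rewrite minor_eval.
apply/eqP; rewrite mulf_eq0; apply/orP; right; apply/eqP.
apply/eqP; apply: contraT => hdet.
have hd : (`|(#|{: P2 n}|%:Z - (k%:Z - 1))%R|%N <= \rank (Nm c z))%N := minor_nz_rank hdet.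
lia.
Qed.

Unset Implicit Arguments.
Set Strict Implicit.

Theorem lemma4p2 (n m : nat) (c : cupdata n m) (k : nat) (z : 'rV[CC]_n) :
  z != 0 -> (Wk c k z <-> Rk c k z).
Proof.
move=> hz.
have [j0 hj0] : exists j0, z 0 j0 != 0.
  case: (pickP (fun j => z 0 j != 0)) => [j0 hj0|H]; first by exists j0.
  move: hz; have -> : z = 0; last by rewrite eqxx.
  by apply/rowP => j; rewrite mxE; have := H j; rewrite /= => /negbFE/eqP.
rewrite Wk_rank /Rk (H1dim_j0 c hj0).
have := rank_leq_row (Nm c z); lia.
Qed.
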